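(* Let $n$ be a positive integer, let $X^+=\{x_1^+,\dots,x_n^+\}$, $X^-=\{x_1^-,\dots,x_n^-\}$ and $X=X^+\cup X^-$, totally ordered by $x_1^+<x_1^-<x_2^+<x_2^-<\cdots<x_n^+<x_n^-$. Then every monochromatic noncrossing partition of $X$ has at least $n+1$ blocks.
   Context: A partition $P$ of a finite totally ordered set $X$ is an unordered collection of nonempty, pairwise disjoint subsets of $X$ (called blocks) whose union is $X$; $|P|$ denotes the number of blocks. Two blocks $B,B'$ of $P$ cross if there exist elements $x_i<x_j<x_k<x_\ell$ of $X$ with $x_i,x_k\in B$ and $x_j,x_\ell\in B'$; $P$ is noncrossing if no two of its blocks cross. With $X=X^+\cup X^-$ as in the claim, a partition $P$ of $X$ is monochromatic if every block is a subset of $X^+$ or a subset of $X^-$. *)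

(* Defs.v *)
From mathcomp Require Import all_boot.
Set Implicit Arguments. Unset Strict Implicit. Unset Printing Implicit Defensive.

(* The totally ordered set X = {x_1^+ < x_1^- < ... < x_n^+ < x_n^-} is
   modelled by 'I_(2n) with its natural order: x_i^+ is the element 2(i-1)
   and x_i^- is the element 2(i-1)+1.  Hence X^+ = even elements,
   X^- = odd elements. *)

Definition in_Xplus (n : nat) (x : 'I_(2 * n)) : bool := ~~ odd x.
Definition in_Xminus (n : nat) (x : 'I_(2 * n)) : bool := odd x.

Definition blocks_cross (T : finType) (ord : rel T) (B B' : {set T}) : Prop :=
  exists xi xj xk xl : T,
    [/\ ord xi xj, ord xj xk, ord xk xl &
        [/\ xi \in B, xk \in B, xj \in B' & xl \in B']].

Definition noncrossing (n : nat) (P : {set {set 'I_(2 * n)}}) : Prop :=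
  forall B B', B \in P -> B' \in P -> B != B' ->
    ~ blocks_cross (fun x y : 'I_(2 * n) => x < y) B B'.

Definition monochromatic (n : nat) (P : {set {set 'I_(2 * n)}}) : Prop :=
  forall B, B \in P ->
    (B \subset [set x | in_Xplus x]) \/ (B \subset [set x | in_Xminus x]).

(* Main.v *)
Require Import Defs.
From mathcomp Require Import all_boot.
From mathcomp Require Import zify.

Definition NCl N (lab : nat -> nat) := forall a b c d, a < b -> b < c -> c < d -> d < N ->
  lab a = lab c -> lab b = lab d -> lab a = lab b.
Definition Monol N (lab : nat -> nat) := forall a b, a < N -> b < N -> lab a = lab b -> odd a = odd b.
Definition cnt N (lab : nat -> nat) := size (undup (map lab (iota 0 N))).

Lemma singleton_ex N lab : NCl N lab -> Monol N lab ->
  (exists i, exists j, [/\ i < j, j < N & lab i = lab j]) ->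
  exists x, [/\ x.+1 < N, 2 < N & forall k, k < N -> lab k = lab x -> k = x].
Proof.
move=> nc mo [i0 [j0 [h1 h2 h3]]].
pose p d := (0 < d) && has (fun i => (i + d < N) && (lab i == lab (i + d))) (iota 0 N).
have exP : exists d, p d.
  exists (j0 - i0); rewrite /p; apply/andP; split; first lia.
  apply/hasP; exists i0; first by rewrite mem_iota; lia.
  have -> : i0 + (j0 - i0) = j0 by lia.
  by rewrite h2 h3 eqxx.
case: (ex_minnP exP) => d /andP[d0 /hasP[i _ /andP[hid /eqP eqi]]] mind.
have d1 : d != 1.
  apply/eqP => e; subst d.
  have := mo i (i + 1) ltac:(lia) ltac:(lia) eqi.
  by rewrite addn1 /=; case: (odd i).
have nx : lab (i.+1) <> lab i.
  move=> e; have := mind 1; rewrite /p /=.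
  have -> : has (fun i0 : nat => (i0 + 1 < N) && (lab i0 == lab (i0 + 1))) (iota 0 N).
    by apply/hasP; exists i; [rewrite mem_iota; lia | rewrite addn1 e eqxx; lia].
  move=> /(_ isT); lia.
exists i.+1; split; [lia | lia |].
move=> k hk ek.
case: (ltngtP k i.+1) => // hki.
- case: (ltngtP k i) => hki2.
  + exfalso; apply: nx; rewrite -ek.
    by apply: (nc k i i.+1 (i + d)) => //; lia.
  + lia.
  + by subst k; exfalso; apply: nx.
- case: (ltngtP k (i + d)) => hkj.
  + exfalso; have := mind (k - i.+1); rewrite /p.
    have -> : has (fun i0 => (i0 + (k - i.+1) < N) && (lab i0 == lab (i0 + (k - i.+1)))) (iota 0 N).
      apply/hasP; exists i.+1; first by rewrite mem_iota; lia.
      have -> : i.+1 + (k - i.+1) = k by lia.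
      rewrite ek eqxx; apply/andP; split => //; lia.
    have -> : 0 < k - i.+1 by lia.
    move=> /(_ isT); lia.
  + exfalso; apply: nx; symmetry.
    by apply: (nc i i.+1 (i + d) k) => //; lia.
  + subst k; exfalso; apply: nx; by rewrite -ek.
Qed.

Definition skip2 x k := if k < x then k else k.+2.

Lemma skip2_lt x a b : a < b -> skip2 x a < skip2 x b.
Proof. rewrite /skip2; case: (ltnP a x); case: (ltnP b x); lia. Qed.

Lemma skip2_neq x k : skip2 x k <> x.
Proof. rewrite /skip2; case: (ltnP k x); lia. Qed.

Lemma skip2_bd x k N : x < N -> k < N - 2 -> skip2 x k < N.
Proof. rewrite /skip2; case: (ltnP k x); lia. Qed.

Lemma skip2_odd x k : odd (skip2 x k) = odd k.
Proof. rewrite /skip2; case: (ltnP k x) => //= _; by rewrite negbK. Qed.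

Lemma main_gen N : forall lab, 0 < N -> NCl N lab -> Monol N lab -> N./2 < cnt N lab.
Proof.
elim: N {-2}N (leqnn N) => [|M IH] N hN lab N0 nc mo; first lia.
case hrep: (has (fun i => has (fun j => (i < j) && (lab i == lab j)) (iota 0 N)) (iota 0 N)).
- have [x [hx1 hx2 hx]] : exists x, [/\ x.+1 < N, 2 < N & forall k, k < N -> lab k = lab x -> k = x].
    apply: singleton_ex => //.
    move/hasP: hrep => [i hi /hasP [j hj /andP[hij /eqP e]]].
    exists i, j; split => //; move: hj; rewrite mem_iota; lia.
  pose lab' k := lab (skip2 x k).
  have nc' : NCl (N - 2) lab'.
    move=> a b c d hab hbc hcd hd; rewrite /lab' => e1 e2.
    have hd' : skip2 x d < N by apply: skip2_bd => //; lia.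
    exact (nc _ _ _ _ (skip2_lt x _ _ hab) (skip2_lt x _ _ hbc) (skip2_lt x _ _ hcd) hd' e1 e2).
  have mo' : Monol (N - 2) lab'.
    move=> a b ha hb; rewrite /lab' => e.
    rewrite -(skip2_odd x a) -(skip2_odd x b).
    by apply: mo => //; apply: skip2_bd => //; lia.
  have IH' := IH (N - 2) ltac:(lia) lab' ltac:(lia) nc' mo'.
  have hsub : {subset undup (map lab' (iota 0 (N - 2))) <= rem (lab x) (undup (map lab (iota 0 N)))}.
    move=> y; rewrite mem_undup => /mapP [k]; rewrite mem_iota => /andP[_ hk] ->.
    rewrite mem_rem_uniq ?undup_uniq // inE; apply/andP; split.
      apply/eqP => e; apply: (skip2_neq x k); apply: hx => //; apply: skip2_bd => //; lia.
    rewrite mem_undup; apply: map_f; rewrite mem_iota; apply/andP; split => //.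
    rewrite add0n; apply: skip2_bd => //; lia.
  have := uniq_leq_size (undup_uniq _) hsub.
  rewrite size_rem; last by rewrite mem_undup map_f // mem_iota; lia.
  rewrite /cnt in IH' *; lia.
- have hu : uniq (map lab (iota 0 N)).
    rewrite map_inj_in_uniq ?iota_uniq //.
    move=> i j hi hj e.
    case: (ltngtP i j) => // hij; exfalso; move/negbT: hrep => /hasPn.
    + move=> /(_ i hi) /hasPn /(_ j hj); by rewrite hij e eqxx.
    + move=> /(_ j hj) /hasPn /(_ i hi); by rewrite hij e eqxx.
  rewrite /cnt undup_id // size_map size_iota; lia.
Qed.

Theorem lemma3p5 (n : nat) (P : {set {set 'I_(2 * n)}}) :
  0 < n ->
  partition P [set: 'I_(2 * n)] ->
  noncrossing P ->
  monochromatic P ->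
  n.+1 <= #|P|.
Proof.
move=> n0 /and3P[/eqP cov triv _] nc mo.
have inc (x : 'I_(2 * n)) : x \in cover P by rewrite cov inE.
pose lab (i : nat) : nat := if insub i is Some x then enum_rank (pblock P x) : nat else 0.
have labE (x : 'I_(2 * n)) : lab x = enum_rank (pblock P x).
  by rewrite /lab valK.
have labeq (x y : 'I_(2 * n)) : lab x = lab y -> pblock P x = pblock P y.
  by rewrite !labE => /val_inj /enum_rank_inj.
have nc' : NCl (2 * n) lab.
  move=> a b c d hab hbc hcd hd e1 e2.
  pose xa := Ordinal (ltn_trans hab (ltn_trans hbc (ltn_trans hcd hd))).
  pose xb := Ordinal (ltn_trans hbc (ltn_trans hcd hd)).
  pose xc := Ordinal (ltn_trans hcd hd).
  pose xd := Ordinal hd.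
  have := labeq xa xc e1; have := labeq xb xd e2 => Ebd Eac.
  case: (eqVneq (pblock P xa) (pblock P xb)) => [E|N].
    by change (lab xa = lab xb); rewrite !labE E.
  exfalso; apply: (nc _ _ (pblock_mem (inc xa)) (pblock_mem (inc xb)) N).
  exists xa, xb, xc, xd; split => //.
  by split; [rewrite mem_pblock | rewrite Eac mem_pblock | rewrite mem_pblock | rewrite Ebd mem_pblock]; apply: inc.
have mo' : Monol (2 * n) lab.
  move=> a b ha hb e.
  have := labeq (Ordinal ha) (Ordinal hb) e => E.
  have xa := mem_pblock P (Ordinal ha); rewrite inc in xa.
  have xb := mem_pblock P (Ordinal hb); rewrite inc in xb.
  rewrite -E in xb.
  case: (mo _ (pblock_mem (inc (Ordinal ha)))) => /subsetP S.
  - have := S _ xa; have := S _ xb; rewrite !inE /in_Xplus /=.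
    by move=> /negPf -> /negPf ->.
  - have := S _ xa; have := S _ xb; rewrite !inE /in_Xminus /=.
    by move=> -> ->.
have := main_gen (2 * n) lab ltac:(lia) nc' mo'.
have hsub : {subset undup (map lab (iota 0 (2 * n))) <= map (fun B => val (enum_rank B)) (enum P)}.
  move=> y; rewrite mem_undup => /mapP [k]; rewrite mem_iota => /andP[_ hk] ->.
  have -> : k = Ordinal hk by [].
  rewrite labE; apply: map_f; rewrite mem_enum; exact: pblock_mem.
have := uniq_leq_size (undup_uniq _) hsub.
rewrite size_map -cardE /cnt.
have -> : (2 * n)./2 = n by lia.
lia.
Qed.
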